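(* For real $0\le x<1$ and every integer $r\ge2$, $$\log\mathcal C_r\left(\frac x2\right)=-\frac{1}{2^r}\int_0^x \pi t^{r-1}\tan\left(\frac{\pi t}{2}\right)dt.$$
   Context: For an integer $r\ge2$ let $P_r(y)=(1-y)\exp\left(y+\frac{y^2}{2}+\cdots+\frac{y^r}{r}\right)$. For real $|x|<\tfrac12$, the Kurokawa–Koyama multiple cosine function of order $r$ is the convergent positive product $\mathcal C_r(x)=\prod_{n\ge1,\ n\text{ odd}}\left\{P_r\left(\frac{x}{n/2}\right)P_r\left(-\frac{x}{n/2}\right)^{(-1)^{r-1}}\right\}^{(n/2)^{r-1}}$, and $\log$ denotes the real logarithm. *)

(* Defs.v *)
From Stdlib Require Import Reals.
From Coquelicot Require Import Coquelicot.
Open Scope R_scope.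

Definition Pr (r : nat) (y : R) : R :=
  (1 - y) * exp (sum_f_R0 (fun j => y ^ (j + 1) / INR (j + 1)) (r - 1)).

(* The bases are positive for |x| < 1/2, so Rpower is the usual real power. *)
Definition Cfactor (r : nat) (x : R) (k : nat) : R :=
  let h := INR (2 * k + 1) / 2 in
  Rpower (Pr r (x / h) * Rpower (Pr r (- (x / h))) ((-1) ^ (r - 1))) (h ^ (r - 1)).

Fixpoint Cpartial (r : nat) (x : R) (N : nat) : R :=
  match N with
  | O => 1
  | S N' => Cpartial r x N' * Cfactor r x N'
  end.

Definition Ccos (r : nat) (x : R) : R := real (Lim_seq (Cpartial r x)).

(* Main.v *)
Require Import Defs.
From Stdlib Require Import Reals Lra Lia ZArith.
From Coquelicot Require Import Coquelicot.
Open Scope R_scope.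

Lemma PI_ub34 : PI <= 334/100.
Proof.
  destruct (PI_ineq 2) as [_ H].
  unfold tg_alt, PI_tg in H; simpl in H. lra.
Qed.

Lemma INR_f3 : INR (Factorial.fact 3) = 6.
Proof. simpl. lra. Qed.
Lemma INR_f5 : INR (Factorial.fact 5) = 120.
Proof. rewrite INR_IZR_INZ. reflexivity. Qed.
Lemma INR_f7 : INR (Factorial.fact 7) = 5040.
Proof. rewrite INR_IZR_INZ. reflexivity. Qed.

Lemma sin_bounds u : 0 <= u -> u <= PI -> u - u^3/6 <= sin u <= u.
Proof.
  intros H1 H2. destruct (SIN u H1 H2) as [A _].
  unfold sin_lb, sin_approx, sin_term in *.
  cbn [sum_f_R0 Nat.mul Nat.add] in A.
  rewrite INR_f3, INR_f5, INR_f7 in A. simpl in A.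
  pose proof PI_ub34.
  assert (0 <= u^2) by nra.
  split.
  - assert (u^5/120 - u^7/5040 >= 0).
    { assert (u^5/120 - u^7/5040 = u^5 * (42 - u^2)/5040) by field.
      assert (0 <= u^5) by (apply pow_le; lra).
      assert (u^2 <= 12) by nra.
      assert (0 <= u^5 * (42 - u^2)/5040).
      { apply Rmult_le_pos; [apply Rmult_le_pos|]; lra. }
      lra. }
    simpl in *. lra.
  - destruct (Req_dec u 0) as [E|E]. { rewrite E, sin_0. lra. }
    left; apply sin_lt_x; lra.
Qed.

Definition cot (u : R) := cos u / sin u.
Definition ff (u : R) := / u - cot u.

Lemma sin_pos_half u : 0 < u <= PI/2 -> 0 < sin u.
Proof. intros. apply sin_gt_0; pose proof PI_RGT_0; lra. Qed.

Lemma ff_deriv c : 0 < c <= PI/2 -> derivable_pt_lim ff c (/ (sin c)^2 - / c^2).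
Proof.
  intros Hc. pose proof (sin_pos_half c Hc).
  apply is_derive_Reals. unfold ff, cot.
  auto_derive.
  - repeat split; lra.
  - pose proof (sin2_cos2 c) as K. unfold Rsqr in K.
    field_simplify_eq; try lra. nra.
Qed.

Lemma ff_deriv_bound c : 0 < c <= PI/2 -> 0 <= / (sin c)^2 - / c^2 <= 1.
Proof.
  intros Hc. pose proof (sin_pos_half c Hc). pose proof PI_ub34.
  assert (c <= PI) by lra.
  destruct (sin_bounds c) as [A B]; try lra.
  set (s := sin c) in *.
  assert (c^2 <= 28/10) by nra.
  assert (E : / s^2 - / c^2 = (c^2 - s^2) / (s^2 * c^2)) by (field; lra).
  rewrite E. assert (0 < s^2 * c^2) by (apply Rmult_lt_0_compat; nra).
  split.
  - apply Rdiv_le_0_compat; nra.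
  - assert (X : c^2 - s^2 <= s^2 * c^2); [|
      apply Rmult_le_reg_r with (s^2*c^2); [lra|];
      unfold Rdiv; rewrite Rmult_assoc, Rinv_l by lra; lra].
    assert (L : 0 <= c - c^3/6).
    { assert (c - c^3/6 = c * (1 - c^2/6)) by field. nra. }
    assert (s^2 >= (c - c^3/6)^2) by nra.
    assert ((c - c^3/6)^2 * (1 + c^2) - c^2 = c^2 * (c^2/36) * ((c^2 - 3) * (c^2 - 8))) by field.
    assert (0 <= c^2 * (c^2/36) * ((c^2 - 3) * (c^2 - 8))).
    { apply Rmult_le_pos. apply Rmult_le_pos; nra. nra. }
    nra.
Qed.

Lemma ff_lip a b : 0 < a -> a <= b -> b <= PI/2 -> Rabs (ff b - ff a) <= b - a.
Proof.
  intros Ha Hab Hb. destruct (Req_dec a b) as [E|E].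
  { subst. unfold Rminus. rewrite Rplus_opp_r, Rabs_R0. lra. }
  destruct (MVT_cor2 ff (fun c => / (sin c)^2 - / c^2) a b) as [c [Hc1 Hc2]].
  lra. intros c Hc. apply ff_deriv. lra.
  rewrite Hc1. destruct (ff_deriv_bound c) as [D1 D2]. lra.
  rewrite Rabs_mult, (Rabs_right (b-a)) by lra. rewrite Rabs_right by lra.
  assert (0 <= b - a) by lra. nra.
Qed.

Fixpoint sumN (f : nat -> R) (n : nat) : R :=
  match n with O => 0 | S n => sumN f n + f n end.

Lemma sumN_ext f g n : (forall i, (i < n)%nat -> f i = g i) -> sumN f n = sumN g n.
Proof. induction n; simpl; intros H; auto. rewrite IHn, H; auto. Qed.

Lemma sumN_plus f g n : sumN (fun i => f i + g i) n = sumN f n + sumN g n.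
Proof. induction n; simpl; [ring|rewrite IHn; ring]. Qed.

Lemma sumN_scal c f n : sumN (fun i => c * f i) n = c * sumN f n.
Proof. induction n; simpl; [ring|rewrite IHn; ring]. Qed.

Lemma sumN_shift f n : sumN f (S n) = f O + sumN (fun i => f (S i)) n.
Proof. induction n; simpl in *; [ring|rewrite IHn; ring]. Qed.

Lemma sumN_split f a b : sumN f (a + b) = sumN f a + sumN (fun i => f (a + i)%nat) b.
Proof. induction b; simpl; [rewrite Nat.add_0_r; ring|rewrite Nat.add_succ_r; simpl; rewrite IHb; ring]. Qed.

Lemma sumN_rev f n : sumN f n = sumN (fun i => f (n - 1 - i)%nat) n.
Proof.
  induction n; [reflexivity|].
  rewrite (sumN_shift (fun i => f (S n - 1 - i)%nat)).
  change (sumN f (S n)) with (sumN f n + f n). rewrite IHn.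
  replace (S n - 1 - 0)%nat with n by lia.
  rewrite Rplus_comm. f_equal. apply sumN_ext. intros i Hi. f_equal. lia.
Qed.

Lemma sumN_le f g n : (forall i, (i < n)%nat -> f i <= g i) -> sumN f n <= sumN g n.
Proof. induction n; simpl; intros H; [lra|]. pose proof (H n (Nat.lt_succ_diag_r n)).
  assert (sumN f n <= sumN g n) by (apply IHn; intros; apply H; lia). lra. Qed.

Lemma sumN_abs f n : Rabs (sumN f n) <= sumN (fun i => Rabs (f i)) n.
Proof. induction n; simpl. rewrite Rabs_R0; lra.
  eapply Rle_trans. apply Rabs_triang. lra. Qed.

Lemma sumN_const c n : sumN (fun _ => c) n = INR n * c.
Proof. induction n; simpl sumN; [simpl; ring|rewrite IHn, S_INR; ring]. Qed.

Lemma cot_double a : 0 < a < PI -> cot a = (cot (a/2) + cot ((a + PI)/2)) / 2.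
Proof.
  intros Ha. set (b := a/2).
  assert (Hb : 0 < b < PI/2) by (unfold b; lra).
  assert (sb : 0 < sin b) by (apply sin_gt_0; lra).
  assert (cb : 0 < cos b) by (apply cos_gt_0; lra).
  replace a with (2*b) by (unfold b; field).
  replace ((2*b + PI)/2) with (b + PI/2) by field.
  replace (2*b/2) with b by field.
  unfold cot. rewrite cos_2a, sin_2a, cos_plus, sin_plus, cos_PI2, sin_PI2.
  field. lra.
Qed.

Lemma cot_FI m th : 0 < th < PI ->
  cot th = / INR (2^m) * sumN (fun j => cot ((th + INR j * PI) / INR (2^m))) (2^m).
Proof.
  intros Hth. induction m.
  - simpl. rewrite Rinv_1. replace ((th + 0*PI)/1) with th by field. ring.
  - set (n := (2^m)%nat) in *.
    assert (Hn : (2^(S m) = n + n)%nat) by (unfold n; simpl; lia).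
    assert (Hpos : 0 < INR n) by (apply lt_0_INR; unfold n; apply Nat.neq_0_lt_0, Nat.pow_nonzero; lia).
    rewrite Hn, sumN_split, <- sumN_plus, plus_INR.
    rewrite IHm at 1. 
    replace (/ (INR n + INR n)) with (/ INR n * / 2) by (field; lra).
    rewrite Rmult_assoc. f_equal. rewrite <- sumN_scal. apply sumN_ext.
    intros j Hj.
    assert (Hj' : INR j + 1 <= INR n) by (rewrite <- S_INR; apply le_INR; lia).
    assert (0 <= INR j) by apply pos_INR.
    rewrite (cot_double ((th + INR j * PI) / INR n)).
    2:{ split. apply Rdiv_lt_0_compat; nra.
        apply Rmult_lt_reg_r with (INR n); auto. unfold Rdiv; rewrite Rmult_assoc, Rinv_l by lra. nra. }
    rewrite plus_INR.
    assert (E1: (th + INR j*PI)/INR n/2 = (th + INR j * PI)/(INR n + INR n)) by (field; lra).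
    assert (E2: ((th + INR j*PI)/INR n + PI)/2 = (th + (INR n + INR j) * PI)/(INR n + INR n)) by (field; lra).
    rewrite E1, E2. field.
Qed.

Lemma cot_per v : cot (v + PI) = cot v.
Proof. unfold cot. rewrite neg_cos, neg_sin. unfold Rdiv. rewrite Rinv_opp. ring. Qed.

Lemma ff_odd w : ff (- w) = - ff w.
Proof. unfold ff, cot. rewrite cos_neg, sin_neg. unfold Rdiv. rewrite !Rinv_opp. ring. Qed.

Lemma cot_sym q th :
  let n := INR (2 * S q) in
  sumN (fun j => cot ((th + INR j * PI) / n)) (2 * S q) =
  cot (th / n) + cot ((th - INR (S q) * PI) / n) +
  sumN (fun i => cot ((th + INR (S i) * PI) / n) + cot ((th - INR (S i) * PI) / n)) q.
Proof.
  intros n.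
  assert (Hn : 0 < n) by (unfold n; apply lt_0_INR; lia).
  replace (2 * S q)%nat with (S q + S q)%nat by lia.
  rewrite sumN_split, sumN_shift, sumN_plus.
  rewrite (sumN_rev (fun i => cot ((th + INR (S q + i) * PI) / n))).
  change (sumN (fun i => cot ((th + INR (S q + (S q - 1 - i)) * PI) / n)) (S q))
    with (sumN (fun i => cot ((th + INR (S q + (S q - 1 - i)) * PI) / n)) q
          + cot ((th + INR (S q + (S q - 1 - q)) * PI) / n)).
  replace ((th + INR 0 * PI) / n) with (th / n) by (simpl; field; lra).
  assert (K : forall i, (i <= q)%nat ->
     cot ((th + INR (S q + (S q - 1 - i)) * PI) / n) = cot ((th - INR (S i) * PI) / n)).
  { intros i Hi. rewrite <- (cot_per ((th - INR (S i) * PI) / n)). f_equal.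
    assert (E : (S q + (S q - 1 - i) + S i = 2 * S q)%nat) by lia.
    apply (f_equal INR) in E. rewrite plus_INR in E. fold n in E.
    replace (INR (S q + (S q - 1 - i))) with (n - INR (S i)) by lra.
    field. lra. }
  rewrite (K q) by lia.
  rewrite (sumN_ext (fun i => cot ((th + INR (S q + (S q - 1 - i)) * PI) / n))
                    (fun i => cot ((th - INR (S i) * PI) / n))).
  2:{ intros i Hi. apply K. lia. }
  ring.
Qed.

Definition Pc (th : R) (q : nat) :=
  / th + sumN (fun i => / (th + INR (S i) * PI) + / (th - INR (S i) * PI)) q.

Lemma ff_lip2 a b : 0 < a <= PI/2 -> 0 < b <= PI/2 -> Rabs (ff a - ff b) <= Rabs (a - b).
Proof.
  intros Ha Hb. destruct (Rle_dec a b).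
  - rewrite Rabs_minus_sym, (Rabs_minus_sym a). rewrite (Rabs_right (b - a)) by lra.
    apply ff_lip; lra.
  - rewrite (Rabs_right (a - b)) by lra. apply ff_lip; lra.
Qed.

Lemma ff_small w : 0 < w <= PI/4 -> Rabs (ff w) <= 2.
Proof.
  intros Hw. pose proof PI2_3_2. pose proof PI_ub34.
  assert (Hq : ff (PI/4) = 4/PI - 1).
  { unfold ff, cot. rewrite sin_PI4, cos_PI4. field. split. lra.
    apply Rgt_not_eq, sqrt_lt_R0. lra. }
  pose proof (ff_lip2 w (PI/4)) as L. 
  replace (ff w) with ((ff w - ff (PI/4)) + ff (PI/4)) by ring.
  eapply Rle_trans. apply Rabs_triang.
  assert (Rabs (ff w - ff (PI/4)) <= 1).
  { eapply Rle_trans. apply L; lra. rewrite Rabs_left1 by lra. lra. }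
  assert (Rabs (ff (PI/4)) <= 1).
  { rewrite Hq.
    assert (4/PI >= 1). { apply Rle_ge. apply Rmult_le_reg_r with PI; [lra|].
      unfold Rdiv. rewrite Rmult_assoc, Rinv_l by lra. lra. }
    assert (4/PI <= 2). { apply Rmult_le_reg_r with PI; [lra|].
      unfold Rdiv. rewrite Rmult_assoc, Rinv_l by lra. lra. }
    rewrite Rabs_right; lra. }
  lra.
Qed.

Lemma edge_small w : 0 < w <= PI/4 -> Rabs (cot (w - PI/2)) <= 3.
Proof.
  intros Hw. pose proof PI2_3_2. pose proof PI_ub34.
  assert (E : cot (w - PI/2) = - (sin w / cos w)).
  { unfold cot. replace (w - PI/2) with (- (PI/2 - w)) by ring.
    rewrite cos_neg, sin_neg, cos_shift, sin_shift. unfold Rdiv. rewrite Rinv_opp. ring. }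
  rewrite E, Rabs_Ropp.
  set (x := PI/2 - w).
  assert (Hc : cos w = sin x) by (unfold x; rewrite sin_shift; auto).
  destruct (sin_bounds x) as [A _]. unfold x; lra. unfold x; lra.
  destruct (sin_bounds w) as [_ B]. lra. lra.
  assert (sw : 0 <= sin w) by (apply sin_ge_0; lra).
  assert (Hx : 3/4 <= x <= 17/10) by (unfold x; lra).
  assert (x - x^3/6 >= 2/5).
  { assert (x - x^3/6 = x * (1 - x^2/6)) by field. assert (x^2 <= 289/100) by nra. nra. }
  rewrite Rabs_right.
  2:{ apply Rle_ge. apply Rdiv_le_0_compat; lra. }
  apply Rmult_le_reg_r with (cos w); [lra|].
  unfold Rdiv. rewrite Rmult_assoc, Rinv_l by lra. lra.
Qed.

Lemma cot_est q th : 0 < th <= PI/2 ->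
  cot th = / INR (2 * S q) * sumN (fun j => cot ((th + INR j * PI) / INR (2 * S q))) (2 * S q) ->
  Rabs (cot th - Pc th q) <= 7 / INR (2 * S q).
Proof.
  intros Hth HFI. pose proof PI2_3_2. pose proof PI_ub34.
  rewrite HFI, cot_sym. set (n := INR (2 * S q)).
  assert (Hn : n = 2 * INR q + 2) by (unfold n; rewrite mult_INR, (S_INR q); simpl; ring).
  assert (Hq0 : 0 <= INR q) by apply pos_INR.
  assert (Hnp : 0 < n) by lra.
  set (T := fun i => ff (- ((th - INR (S i) * PI) / n)) - ff ((th + INR (S i) * PI) / n)).
  assert (KT : forall i, (i < q)%nat ->
     cot ((th + INR (S i) * PI) / n) + cot ((th - INR (S i) * PI) / n)
     = n * (/ (th + INR (S i) * PI) + / (th - INR (S i) * PI)) + T i).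
  { intros i Hi. unfold T, ff.
    assert (Hk : 1 <= INR (S i) <= INR q) by (split; [rewrite S_INR; pose proof (pos_INR i); lra| apply le_INR; lia]).
    assert (cot (- ((th - INR (S i) * PI) / n)) = - cot ((th - INR (S i) * PI) / n)).
    { unfold cot. rewrite cos_neg, sin_neg. unfold Rdiv. rewrite Rinv_opp. ring. }
    rewrite H1, Rinv_opp.
    assert (A1 : / ((th + INR (S i) * PI) / n) = n * / (th + INR (S i) * PI)) by (field; nra).
    assert (A2 : / ((th - INR (S i) * PI) / n) = n * / (th - INR (S i) * PI)) by (field; nra).
    rewrite A1, A2. ring. }
  assert (BT : forall i, (i < q)%nat -> Rabs (T i) <= 2 * th / n).
  { intros i Hi. unfold T.
    replace (- ((th - INR (S i) * PI) / n)) with ((INR (S i) * PI - th)/n) by (field; lra).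
    assert (Hk : 1 <= INR (S i) <= INR q) by (split; [rewrite S_INR; pose proof (pos_INR i); lra| apply le_INR; lia]).
    eapply Rle_trans. apply ff_lip2.
    - split. apply Rdiv_lt_0_compat; nra.
      apply Rmult_le_reg_r with n; [lra|]. unfold Rdiv. rewrite Rmult_assoc, Rinv_l by lra. nra.
    - split. apply Rdiv_lt_0_compat; nra.
      apply Rmult_le_reg_r with n; [lra|]. unfold Rdiv. rewrite Rmult_assoc, Rinv_l by lra. nra.
    - right. replace ((INR (S i) * PI - th) / n - (th + INR (S i) * PI) / n) with (- (2 * th / n)) by (field; lra).
      rewrite Rabs_Ropp. apply Rabs_right. apply Rle_ge, Rdiv_le_0_compat; lra. }
  assert (Hc0 : cot (th / n) = n / th - ff (th / n)).
  { unfold ff. field. lra. }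
  assert (Hdp : (th - INR (S q) * PI) / n = th / n - PI / 2).
  { rewrite Hn, S_INR. field. lra. }
  assert (Hw : 0 < th / n <= PI / 4).
  { split. apply Rdiv_lt_0_compat; lra.
    apply Rmult_le_reg_r with n; [lra|]. unfold Rdiv. rewrite Rmult_assoc, Rinv_l by lra. nra. }
  pose proof (ff_small _ Hw) as F1. pose proof (edge_small _ Hw) as F2.
  rewrite Hdp, Hc0.
  rewrite (sumN_ext _ (fun i => n * (/ (th + INR (S i) * PI) + / (th - INR (S i) * PI)) + T i) q KT).
  rewrite sumN_plus, sumN_scal.
  unfold Pc.
  match goal with |- Rabs (/ n * (?a - ?b + ?c + (n * ?s + ?t)) - (/ th + ?s)) <= _ =>
    replace (/ n * (a - b + c + (n * s + t)) - (/ th + s)) with (/ n * (- b + c + t)) by (field; lra) end.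
  assert (ST : Rabs (sumN T q) <= INR q * (2 * th / n)).
  { eapply Rle_trans. apply sumN_abs. rewrite <- sumN_const. apply sumN_le. auto. }
  assert (INR q * (2 * th / n) <= PI / 2).
  { apply Rmult_le_reg_r with n; [lra|]. unfold Rdiv. rewrite !Rmult_assoc, Rinv_l by lra. nra. }
  rewrite Rabs_mult, Rabs_right by (apply Rle_ge; left; apply Rinv_0_lt_compat; lra).
  unfold Rdiv. rewrite (Rmult_comm 7). apply Rmult_le_compat_l. left; apply Rinv_0_lt_compat; lra.
  eapply Rle_trans. apply Rabs_triang. eapply Rle_trans. apply Rplus_le_compat_r. apply Rabs_triang.
  rewrite Rabs_Ropp. lra.
Qed.

Definition Sn (t : R) (N : nat) := sumN (fun k => 4 * t / ((2 * INR k + 1)^2 - t^2)) N.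

Lemma Pc_S t q : 0 <= t < 1 ->
  PI / 2 * Pc (PI * (1 - t) / 2) q = Sn t (S q) / 2 + / (2 * INR q + 1 + t).
Proof.
  intros Ht. pose proof PI_RGT_0. induction q.
  - unfold Pc, Sn. simpl. field. repeat split; nra.
  - unfold Pc in *. set (th := PI * (1 - t) / 2) in *.
    change (sumN ?f (S q)) with (sumN f q + f q).
    set (A := sumN (fun i => / (th + INR (S i) * PI) + / (th - INR (S i) * PI)) q) in *.
    set (X := / (th + INR (S q) * PI) + / (th - INR (S q) * PI)).
    replace (PI/2 * (/ th + (A + X))) with (PI/2*(/th + A) + PI/2*X) by ring.
    rewrite IHq. unfold Sn. change (sumN ?f (S (S q))) with (sumN f (S q) + f (S q)).
    unfold X, th. rewrite !S_INR. pose proof (pos_INR q).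
    field. repeat split; nra.
Qed.

Lemma cot_tan x : cot (PI / 2 - x) = tan x.
Proof. unfold cot, tan. rewrite cos_shift, sin_shift. reflexivity. Qed.

Lemma tan_approx t m : 0 <= t < 1 ->
  Rabs (PI * tan (PI * t / 2) - Sn t (2^m)) <= 14 / INR (2^m).
Proof.
  intros Ht. pose proof PI2_3_2. pose proof PI_ub34.
  set (th := PI * (1 - t) / 2).
  assert (Hth : 0 < th <= PI / 2) by (unfold th; split; nra).
  set (q := (2^m - 1)%nat).
  assert (Hp : (2^m = S q)%nat) by (unfold q; pose proof (Nat.pow_nonzero 2 m); lia).
  assert (H2 : (2^(S m) = 2 * S q)%nat) by (rewrite Nat.pow_succ_r'; lia).
  pose proof (cot_FI (S m) th ltac:(lra)) as F. rewrite H2 in F.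
  pose proof (cot_est q th Hth F) as E.
  rewrite Hp.
  assert (Ht2 : th = PI / 2 - PI * t / 2) by (unfold th; field).
  rewrite Ht2, cot_tan in E. rewrite <- Ht2 in E.
  pose proof (Pc_S t q Ht) as P. fold th in P.
  assert (Hq : 0 <= INR q) by apply pos_INR.
  rewrite S_INR. assert (En : INR (2 * S q) = 2 * (INR q + 1)) by (rewrite mult_INR, (S_INR q); simpl; ring).
  rewrite En in E.
  assert (EE : PI * tan (PI * t / 2) - Sn t (S q) = PI * (tan (PI * t / 2) - Pc th q) + 2 / (2 * INR q + 1 + t)).
  { assert (Sn t (S q) = 2 * (PI / 2 * Pc th q) - 2 * / (2 * INR q + 1 + t)) as ->
      by (rewrite P; field; lra).
    field. lra. }
  rewrite EE. eapply Rle_trans. apply Rabs_triang.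
  rewrite Rabs_mult, (Rabs_right PI) by lra.
  rewrite (Rabs_right (2 / _)).
  2:{ apply Rle_ge, Rdiv_le_0_compat; lra. }
  assert (B1 : PI * Rabs (tan (PI * t / 2) - Pc th q) <= 12 / (INR q + 1)).
  { eapply Rle_trans. apply Rmult_le_compat_l. lra. apply E.
    unfold Rdiv. rewrite Rinv_mult. 
    set (z := / (INR q + 1)).
    assert (0 < z) by (apply Rinv_0_lt_compat; lra).
    assert (PI * z <= 334/100 * z) by (apply Rmult_le_compat_r; lra).
    replace (PI * (7 * (/2 * z))) with (7/2 * (PI * z)) by field. lra. }
  assert (B2 : 2 / (2 * INR q + 1 + t) <= 2 / (INR q + 1)).
  { apply Rmult_le_compat_l. lra. apply Rinv_le_contravar; lra. }
  unfold Rdiv in *. lra.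
Qed.

Lemma Sn_tail t N d : 0 <= t < 1 -> (1 <= N)%nat ->
  0 <= Sn t (N + d) - Sn t N <= / INR N - / INR (N + d).
Proof.
  intros Ht HN. induction d.
  - rewrite Nat.add_0_r. lra.
  - rewrite Nat.add_succ_r. unfold Sn in *. change (sumN ?f (S ?k)) with (sumN f k + f k).
    set (k := (N + d)%nat) in *.
    assert (Hk : 1 <= INR k) by (replace 1 with (INR 1) by reflexivity; apply le_INR; unfold k; lia).
    rewrite S_INR.
    assert (D : (2 * INR k + 1)^2 - t^2 >= 4 * INR k * (INR k + 1)) by nra.
    assert (T1 : 0 <= 4 * t / ((2 * INR k + 1)^2 - t^2)) by (apply Rdiv_le_0_compat; nra).
    assert (T2 : 4 * t / ((2 * INR k + 1)^2 - t^2) <= / INR k - / (INR k + 1)).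
    { replace (/ INR k - / (INR k + 1)) with (4 / (4 * INR k * (INR k + 1))) by (field; lra).
      unfold Rdiv. apply Rmult_le_compat. lra. left; apply Rinv_0_lt_compat; nra. lra.
      apply Rinv_le_contravar; nra. }
    lra.
Qed.

Lemma pow2_unbounded X : exists m, X <= INR (2^m).
Proof.
  destruct (archimed X) as [H _].
  assert (Hz : forall n, INR n <= INR (2^n)).
  { intros n. apply le_INR. induction n; simpl; [lia|]. pose proof (Nat.pow_nonzero 2 n). lia. }
  destruct (Rle_dec X 0).
  - exists O. simpl. lra.
  - assert (0 <= IZR (up X)) by lra.
    exists (Z.to_nat (up X)). eapply Rle_trans; [|apply Hz].
    rewrite INR_IZR_INZ, Znat.Z2Nat.id. lra. apply le_IZR. lra.
Qed.

Lemma tan_series_bound t N : 0 <= t < 1 -> (1 <= N)%nat ->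
  Rabs (PI * tan (PI * t / 2) - Sn t N) <= / INR N.
Proof.
  intros Ht HN. apply Rle_plus_epsilon. intros eps Heps.
  destruct (pow2_unbounded (INR N + 14 / eps)) as [m Hm].
  assert (HNp : (N <= 2^m)%nat).
  { apply INR_le. assert (0 < 14/eps) by (apply Rdiv_lt_0_compat; lra). lra. }
  pose proof (tan_approx t m Ht) as A.
  destruct (Sn_tail t N (2^m - N) Ht HN) as [B1 B2].
  replace (N + (2^m - N))%nat with (2^m)%nat in B1, B2 by lia.
  assert (HN1 : 1 <= INR N) by (replace 1 with (INR 1) by reflexivity; apply le_INR; lia).
  assert (0 < 14/eps) by (apply Rdiv_lt_0_compat; lra).
  assert (Hp : 0 < INR (2^m)) by lra.
  assert (C : 14 / INR (2^m) <= eps).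
  { assert (14 / eps <= INR (2^m)) by lra.
    assert (14 <= eps * INR (2^m)).
    { replace 14 with (eps * (14/eps)) at 1 by (field; lra). apply Rmult_le_compat_l; lra. }
    apply Rmult_le_reg_r with (INR (2^m)); [lra|]. unfold Rdiv. rewrite Rmult_assoc, Rinv_l by lra. lra. }
  assert (0 < / INR (2^m)) by (apply Rinv_0_lt_compat; lra).
  replace (PI * tan (PI * t / 2) - Sn t N) with
    ((PI * tan (PI * t / 2) - Sn t (2^m)) + (Sn t (2^m) - Sn t N)) by ring.
  eapply Rle_trans. apply Rabs_triang. rewrite (Rabs_right (_ - Sn t N)) by lra. lra.
Qed.

Definition Ef (n : nat) (y : R) := sum_f_R0 (fun j => y ^ (j + 1) / INR (j + 1)) n.
Definition Gf (n : nat) (y : R) := sum_f_R0 (fun j => y ^ j) n.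

Lemma pow_term_deriv m y : is_derive (fun y => y ^ (S m) / INR (S m)) y (y ^ m).
Proof.
  assert (D : is_derive (fun y => y ^ (S m)) y (INR (S m) * y ^ m)).
  { apply is_derive_Reals. apply (derivable_pt_lim_pow y (S m)). }
  apply is_derive_ext with (fun y => / INR (S m) * y ^ (S m)).
  { intros t. unfold Rdiv. apply Rmult_comm. }
  replace (y ^ m) with (/ INR (S m) * (INR (S m) * y ^ m)).
  2:{ field. apply not_0_INR. lia. }
  apply (is_derive_scal (fun y => y ^ (S m))). exact D.
Qed.

Lemma Ef_deriv n y : is_derive (Ef n) y (Gf n y).
Proof.
  induction n.
  - unfold Ef, Gf. simpl. auto_derive. auto. simpl. field.
  - apply is_derive_ext with (fun y => Ef n y + y^(S (S n))/INR(S (S n))).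
    { intros t. unfold Ef. change (sum_f_R0 ?f (S n)) with (sum_f_R0 f n + f (S n)). cbv beta. replace (S n + 1)%nat with (S (S n)) by lia. reflexivity. }
    replace (Gf (S n) y) with (Gf n y + y^(S n)) by reflexivity.
    apply (is_derive_plus (Ef n)); [exact IHn|].
    apply pow_term_deriv.
Qed.

Lemma Gf_closed n y : (1 - y) * Gf n y = 1 - y ^ (S n).
Proof. induction n; unfold Gf in *; simpl; [ring|]. simpl in IHn.
  change (sum_f_R0 (fun j => y ^ j) n + y * y ^ n) with (sum_f_R0 (fun j => y ^ j) n + y ^ S n).
  rewrite Rmult_plus_distr_l, IHn. simpl. ring. Qed.

Lemma Ef_0 n : Ef n 0 = 0.
Proof. induction n; unfold Ef in *. simpl; field.
  change (sum_f_R0 ?f (S n)) with (sum_f_R0 f n + f (S n)). cbv beta. rewrite IHn.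
  rewrite pow_i by lia. unfold Rdiv. ring. Qed.

Definition nk (k : nat) := 2 * INR k + 1.

Definition psi (r1 k : nat) (x : R) :=
  (nk k / 2) ^ r1 * (ln (1 - x / nk k) + Ef r1 (x / nk k)
     + (-1) ^ r1 * (ln (1 + x / nk k) + Ef r1 (- (x / nk k)))).

Definition Dk (r1 k : nat) (t : R) := - (t ^ r1 / 2 ^ (S r1)) * (4 * t / (nk k ^ 2 - t ^ 2)).

Lemma nk_ge1 k : 1 <= nk k.
Proof. unfold nk. pose proof (pos_INR k). lra. Qed.

Lemma psi_deriv r1 k x : -1 < x < 1 -> is_derive (psi r1 k) x (Dk r1 k x).
Proof.
  intros Hx. pose proof (nk_ge1 k) as Hn. set (n := nk k) in *.
  assert (Hy : -1 < x / n < 1).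
  { split; [apply Rmult_lt_reg_r with n|apply Rmult_lt_reg_r with n]; try lra;
    unfold Rdiv; rewrite Rmult_assoc, Rinv_l by lra; nra. }
  unfold psi. fold n.
  auto_derive.
  - repeat split; try lra; try (exists (Gf r1 (x * / n)); apply Ef_deriv);
    try (exists (Gf r1 (- (x * / n))); apply Ef_deriv).
  - replace (Derive (fun x0 => Ef r1 x0) (x * / n)) with (Gf r1 (x * / n))
      by (symmetry; apply is_derive_unique, Ef_deriv).
    replace (Derive (fun x0 => Ef r1 x0) (- (x * / n))) with (Gf r1 (- (x * / n)))
      by (symmetry; apply is_derive_unique, Ef_deriv).
    set (y := x * / n). fold (x / n) in y.
    assert (G1 : Gf r1 y = (1 - y ^ S r1) / (1 - y)).
    { rewrite <- Gf_closed. field. unfold y; lra. }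
    assert (G2 : Gf r1 (- y) = (1 - (- y) ^ S r1) / (1 + y)).
    { rewrite <- Gf_closed. field. unfold y; lra. }
    rewrite G1, G2.
    assert (P1 : (- y) ^ S r1 = - y * ((-1) ^ r1 * y ^ r1)).
    { simpl. replace (- y) with (-1 * y) at 2 by ring. rewrite Rpow_mult_distr. ring. }
    rewrite P1.
    assert (P2 : y ^ S r1 = y * y ^ r1) by reflexivity. rewrite P2.
    assert (P3 : y ^ r1 = x ^ r1 / n ^ r1).
    { unfold y, Rdiv. rewrite Rpow_mult_distr, pow_inv. reflexivity. }
    assert (P4 : (n / 2) ^ r1 = n ^ r1 / 2 ^ r1).
    { unfold Rdiv. rewrite Rpow_mult_distr, pow_inv. reflexivity. }
    rewrite P3, P4. unfold Dk. fold n.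
    assert (AA : (-1) ^ r1 * (-1) ^ r1 = 1).
    { rewrite <- Rpow_mult_distr. replace (-1 * -1) with 1 by ring. apply pow1. }
    assert (nz1 : n ^ r1 <> 0) by (apply pow_nonzero; lra).
    assert (nz2 : 2 ^ r1 <> 0) by (apply pow_nonzero; lra).
    unfold y in *. set (A := (-1) ^ r1) in *. set (X := x ^ r1). set (Nn := n ^ r1) in *. set (T := 2 ^ r1) in *.
    change (2 ^ S r1) with (2 * T).
    assert (H1 : 1 - x / n <> 0) by lra. assert (H2 : 1 + x / n <> 0) by lra.
    assert (H3 : n ^ 2 - x ^ 2 <> 0) by nra.
    field_simplify_eq; [|repeat split; lra].
    assert (A2 : A ^ 2 = 1) by (simpl; rewrite Rmult_1_r; exact AA).
    rewrite A2. ring.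
Qed.

Lemma Cfactor_exp r1 k x : -1 < x < 1 -> Cfactor (S r1) (x / 2) k = exp (psi r1 k x).
Proof.
  intros Hx. pose proof (nk_ge1 k) as Hn.
  unfold Cfactor, Rpower, Pr, psi. replace (S r1 - 1)%nat with r1 by lia.
  assert (Hh : INR (2 * k + 1) / 2 = nk k / 2).
  { unfold nk. rewrite plus_INR, mult_INR. simpl. field. }
  rewrite Hh. set (n := nk k) in *.
  replace (x / 2 / (n / 2)) with (x / n) by (field; lra).
  assert (Hy : -1 < x / n < 1).
  { split; [apply Rmult_lt_reg_r with n|apply Rmult_lt_reg_r with n]; try lra;
    unfold Rdiv; rewrite Rmult_assoc, Rinv_l by lra; nra. }
  f_equal. f_equal.
  fold (Ef r1 (x / n)). fold (Ef r1 (- (x / n))).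
  rewrite ln_mult. 2:{ apply Rmult_lt_0_compat. lra. apply exp_pos. } 2:{ apply exp_pos. }
  rewrite ln_exp, ln_mult, ln_exp by (lra || apply exp_pos).
  rewrite ln_mult, ln_exp by (lra || apply exp_pos).
  replace (1 - - (x / n)) with (1 + x / n) by ring. ring.
Qed.

Lemma Cpartial_exp r1 x N : -1 < x < 1 ->
  Cpartial (S r1) (x / 2) N = exp (sumN (fun k => psi r1 k x) N).
Proof.
  intros Hx. induction N; simpl. rewrite exp_0; reflexivity.
  rewrite IHN, Cfactor_exp by auto. rewrite exp_plus. reflexivity.
Qed.

Lemma psi_0 r1 k : psi r1 k 0 = 0.
Proof.
  unfold psi. replace (0 / nk k) with 0 by (unfold Rdiv; ring).
  rewrite Ropp_0, Rminus_0_r, Rplus_0_r, ln_1, Ef_0. ring.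
Qed.

Lemma Dk_cont r1 k t : -1 < t < 1 -> continuous (Dk r1 k) t.
Proof.
  intros Ht. apply (ex_derive_continuous (Dk r1 k)). pose proof (nk_ge1 k). unfold Dk.
  auto_derive. nra.
Qed.

Lemma int_psi r1 k x : 0 <= x < 1 -> is_RInt (Dk r1 k) 0 x (psi r1 k x).
Proof.
  intros Hx.
  replace (psi r1 k x) with (minus (psi r1 k x) (psi r1 k 0)).
  2:{ rewrite psi_0. unfold minus, plus, opp; simpl. ring. }
  apply (is_RInt_derive (psi r1 k) (Dk r1 k)).
  - intros t Ht. rewrite Rmin_left, Rmax_right in Ht by lra. apply psi_deriv. lra.
  - intros t Ht. rewrite Rmin_left, Rmax_right in Ht by lra. apply Dk_cont. lra.
Qed.

Lemma int_sum r1 x N : 0 <= x < 1 ->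
  is_RInt (fun t => sumN (fun k => Dk r1 k t) N) 0 x (sumN (fun k => psi r1 k x) N).
Proof.
  intros Hx. induction N.
  - simpl. pose proof (is_RInt_const 0 x 0) as H.
    unfold scal in H; simpl in H; unfold mult in H; simpl in H. rewrite Rmult_0_r in H. exact H.
  - simpl. apply (is_RInt_plus (fun t => sumN (fun k => Dk r1 k t) N) (Dk r1 N)).
    exact IHN. apply int_psi; auto.
Qed.

Lemma sumD r1 t N : sumN (fun k => Dk r1 k t) N = - (t ^ r1 / 2 ^ S r1) * Sn t N.
Proof. unfold Sn, Dk, nk. rewrite <- sumN_scal. reflexivity. Qed.

Lemma pow_le1 n t : 0 <= t <= 1 -> 0 <= t ^ n <= 1.
Proof. intros Ht. induction n; simpl; [lra|]. split; [apply Rmult_le_pos; lra|].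
  replace 1 with (1 * 1) by ring. apply Rmult_le_compat; lra. Qed.

Lemma g_cont r1 t : 0 <= t < 1 -> continuous (fun t => PI * t ^ r1 * tan (PI * t / 2)) t.
Proof.
  intros Ht. apply (ex_derive_continuous (fun t => PI * t ^ r1 * tan (PI * t / 2))).
  unfold tan. auto_derive.
  assert (0 < cos (PI * t / 2)). { apply cos_gt_0; pose proof PI_RGT_0; nra. }
  lra.
Qed.

Lemma main_bound r1 x N : 0 <= x < 1 -> (1 <= N)%nat ->
  Rabs (RInt (fun t => PI * t ^ r1 * tan (PI * t / 2)) 0 x
        + 2 ^ S r1 * sumN (fun k => psi r1 k x) N) <= x * / INR N.
Proof.
  intros Hx HN.
  set (g := fun t => PI * t ^ r1 * tan (PI * t / 2)).
  assert (Eg : ex_RInt g 0 x).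
  { apply (ex_RInt_continuous g). intros z Hz. rewrite Rmin_left, Rmax_right in Hz by lra.
    apply g_cont. lra. }
  pose proof (RInt_correct g 0 x Eg) as Ig.
  pose proof (is_RInt_scal _ 0 x (2 ^ S r1) _ (int_sum r1 x N Hx)) as Is.
  pose proof (is_RInt_plus _ _ 0 x _ _ Ig Is) as Ip.
  set (h := fun y => plus (g y) (scal (2 ^ S r1) (sumN (fun k => Dk r1 k y) N))) in Ip.
  assert (Eh : ex_RInt h 0 x) by (eexists; exact Ip).
  pose proof (is_RInt_unique h 0 x _ Ip) as U.
  pose proof (abs_RInt_le_const h 0 x (/ INR N) (proj1 Hx) Eh) as B.
  rewrite U in B. change (plus ?a ?b) with (a + b) in B. change (scal ?a ?b) with (a * b) in B.
  replace (x * / INR N) with ((x - 0) * / INR N) by ring.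
  apply B. intros t Ht.
  unfold h. change (plus ?a ?b) with (a + b). change (scal ?a ?b) with (a * b).
  rewrite sumD. unfold g.
  replace (PI * t ^ r1 * tan (PI * t / 2) + 2 ^ S r1 * (- (t ^ r1 / 2 ^ S r1) * Sn t N))
    with (t ^ r1 * (PI * tan (PI * t / 2) - Sn t N)).
  2:{ field. apply pow_nonzero. lra. }
  rewrite Rabs_mult. destruct (pow_le1 r1 t) as [P1 P2]. lra.
  rewrite Rabs_right by lra.
  pose proof (tan_series_bound t N ltac:(lra) HN) as T.
  replace (/ INR N) with (1 * / INR N) by ring.
  apply Rmult_le_compat; try lra. apply Rabs_pos.
Qed.

Theorem proposition3p3 (r : nat) (x : R) :
  (2 <= r)%nat -> 0 <= x < 1 ->
  ln (Ccos r (x / 2)) =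
  - / 2 ^ r * RInt (fun t => PI * t ^ (r - 1) * tan (PI * t / 2)) 0 x.
Proof.
  intros Hr Hx. destruct r as [|r1]; [lia|].
  replace (S r1 - 1)%nat with r1 by lia.
  set (Ig := RInt (fun t => PI * t ^ r1 * tan (PI * t / 2)) 0 x).
  set (l := - / 2 ^ S r1 * Ig).
  assert (P2 : 0 < 2 ^ S r1) by (apply pow_lt; lra).
  assert (L : is_lim_seq (fun N => sumN (fun k => psi r1 k x) N) l).
  { apply is_lim_seq_spec. intros eps.
    destruct (archimed (/ eps)) as [A _].
    assert (0 < / eps) by (apply Rinv_0_lt_compat; apply cond_pos).
    exists (S (Z.to_nat (up (/ eps)))). intros N HN.
    assert (HN1 : (1 <= N)%nat) by lia.
    pose proof (main_bound r1 x N Hx HN1) as B.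
    assert (HNr : / eps < INR N).
    { apply Rlt_le_trans with (IZR (up (/ eps))). lra.
      rewrite <- (Znat.Z2Nat.id (up (/eps))) at 1 by (apply le_IZR; lra).
      rewrite <- INR_IZR_INZ. apply le_INR. lia. }
    assert (0 < INR N) by lra.
    fold Ig in B.
    replace (sumN (fun k => psi r1 k x) N - l) with (/ 2 ^ S r1 * (Ig + 2 ^ S r1 * sumN (fun k => psi r1 k x) N))
      by (unfold l; field; lra).
    rewrite Rabs_mult, Rabs_right by (apply Rle_ge; left; apply Rinv_0_lt_compat; lra).
    assert (/ 2 ^ S r1 <= 1).
    { rewrite <- Rinv_1. apply Rinv_le_contravar. lra. 
      replace 1 with (2 ^ 0) by reflexivity. apply Rle_pow; [lra|lia]. }
    assert (x * / INR N < eps).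
    { assert (0 < / INR N) by (apply Rinv_0_lt_compat; lra). apply Rle_lt_trans with (/ INR N). nra.
      rewrite <- (Rinv_inv eps). apply Rinv_lt_contravar; [|lra]. 
      apply Rmult_lt_0_compat; lra. }
    assert (0 <= Rabs (Ig + 2 ^ S r1 * sumN (fun k => psi r1 k x) N)) by apply Rabs_pos.
    assert (0 < / 2 ^ S r1) by (apply Rinv_0_lt_compat; lra).
    nra. }
  assert (C : is_lim_seq (Cpartial (S r1) (x / 2)) (exp l)).
  { apply is_lim_seq_ext with (fun N => exp (sumN (fun k => psi r1 k x) N)).
    { intros N. rewrite Cpartial_exp by lra. reflexivity. }
    apply (is_lim_seq_continuous exp). apply derivable_continuous_pt, derivable_pt_exp.
    exact L. }
  unfold Ccos. rewrite (is_lim_seq_unique _ _ C). simpl. rewrite ln_exp. reflexivity.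
Qed.
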